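(* Let $p$ be a prime with $p\equiv3\pmod 4$. Then $P_{\frac{p-1}2}(3)\equiv0\pmod p$ (i.e. $p$ divides the numerator of the rational number $P_{\frac{p-1}2}(3)$).
   Context: $P_n(x)$ is the $n$-th Legendre polynomial, defined by $\frac1{\sqrt{1-2xt+t^2}}=\sum_{n\ge0}P_n(x)t^n$, equivalently $P_n(x)=\frac1{2^n}\sum_{k=0}^{[n/2]}\frac{(-1)^k(2n-2k)!}{k!(n-k)!(n-2k)!}x^{n-2k}$. *)

(* Defs.v *)
From mathcomp Require Import all_boot all_order all_algebra.
Set Implicit Arguments. Unset Strict Implicit. Unset Printing Implicit Defensive.
Import Order.TTheory GRing.Theory Num.Theory.
Local Open Scope ring_scope.

Definition legendreP (n : nat) (x : rat) : rat :=
  (2%:R ^+ n)^-1 *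
  \sum_(0 <= k < (n./2).+1)
     ((-1) ^+ k * ((2 * n - 2 * k)`!)%:R
        / ((k`!)%:R * ((n - k)`!)%:R * ((n - 2 * k)`!)%:R)) * x ^+ (n - 2 * k).

(* Main.v *)
Require Import Defs.
From mathcomp Require Import all_boot all_order all_algebra.
From mathcomp Require Import all_field ring zify.
Set Implicit Arguments. Unset Strict Implicit. Unset Printing Implicit Defensive.
Import Order.TTheory GRing.Theory Num.Theory.
Local Open Scope ring_scope.

Lemma sum_delta (R : nzRingType) M n (f : nat -> R) :
  ((M < n)%N -> f n = 0) -> \sum_(j < M.+1) f j * ((j : nat) == n)%:R = f n.
Proof.
move=> H; case: (ltnP M n) => hMn.
  rewrite H // big1 // => j _; have -> : (j == n :> nat) = false.
    by apply/negbTE; rewrite neq_ltn (leq_trans (ltn_ord j)).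
  by rewrite mulr0.
have hn : (n < M.+1)%N by [].
rewrite (bigD1 (Ordinal hn)) //= eqxx mulr1 big1 ?addr0 // => j hj.
have -> : (j == n :> nat) = false.
  by apply/negbTE; apply: contra hj => /eqP e; apply/eqP/val_inj.
by rewrite mulr0.
Qed.

Definition Bgen (R : nzRingType) n : R :=
  \sum_(0 <= k < n./2.+1) (-1) ^+ k * ('C(n, k) * 'C(2 * n - 2 * k, n))%:R * 3%:R ^+ (n - 2 * k).

Section PS.
Variable p : nat.
Hypothesis pr : prime p.
Local Notation F := ('F_p).

Lemma cardF : #|F| = p. Proof. exact: card_Fp. Qed.

Lemma ferm (u : F) : u != 0 -> u ^+ (p.-1) = 1.
Proof.
move=> u0; apply: (mulfI u0); rewrite -exprS mulr1.
have := expf_card u; rewrite cardF.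
by rewrite prednK // prime_gt0.
Qed.

Lemma exists_nonroot m : (0 < m < p.-1)%N -> exists2 a : F, a != 0 & a ^+ m != 1.
Proof.
move=> /andP [m0 mp].
have : [exists a : F, (a != 0) && (a ^+ m != 1)].
  apply: contraT => /existsPn H.
  have Hr : all (root ('X^m - 1)) (enum [pred x : F | x != 0]).
    apply/allP => x; rewrite mem_enum inE => x0.
    have := H x; rewrite x0 /= negbK => /eqP xm.
    by rewrite /root !hornerE xm subrr.
  have := max_poly_roots _ Hr (enum_uniq _).
  rewrite -cardE size_XnsubC // cardC1 cardF.
  rewrite -subn1 in mp *; rewrite ltnS => h.
  have := h _; rewrite -size_poly_eq0 size_XnsubC // => /(_ isT) h2.
  by move: mp; rewrite ltnNge h2.
by case/existsP => a /andP [] *; exists a.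
Qed.

Lemma powsum m : (0 < m)%N -> (m < 2 * p.-1)%N ->
  \sum_(u : F) u ^+ m = if m == p.-1 then -1 else 0.
Proof.
move=> m0 m2.
have p1 : (1 < p)%N by apply: prime_gt1.
case: eqP => [-> | mne].
  rewrite (bigD1 0) //= expr0n /=.
  have -> : (p.-1 == 0%N) = false by apply/negbTE; rewrite -lt0n; lia.
  rewrite add0r (eq_bigr (fun _ => 1)); last by move=> u; exact: ferm.
  rewrite sumr_const cardC1 cardF.
  apply: (addIr 1); rewrite addNr.
  by rewrite natr1 prednK ?prime_gt0 // pchar_Fp_0.
have [m' [m'0 m'p Hm]] : exists m', [/\ (0 < m')%N, (m' < p.-1)%N & forall u : F, u ^+ m = u ^+ m'].
  case: (ltnP m p.-1) => hm; first by exists m.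
  exists (m - p.-1)%N; split; [lia | lia | move=> u].
  rewrite {1}(_ : m = ((m - p.-1) + p.-1)%N); last by lia.
  rewrite exprD; case: (eqVneq u 0) => [-> | u0]; last by rewrite ferm // mulr1.
  rewrite !expr0n.
  have h : (m - p.-1 == 0)%N = false by apply/eqP; lia.
  by rewrite h mul0r.
rewrite (eq_bigr (fun u => u ^+ m')); last by move=> u _; exact: Hm.
have [a a0 am] := exists_nonroot (m := m') (introT andP (conj m'0 m'p)).
set S := \sum_(u : F) u ^+ m'.
have HS : S = a ^+ m' * S.
  rewrite {1}/S (reindex_inj (mulfI a0)) /= /S mulr_sumr.
  by apply: eq_bigr => u _; rewrite exprMn.
have : (1 - a ^+ m') * S = 0.
  by rewrite mulrBl mul1r -HS subrr.
by move/eqP; rewrite mulf_eq0 subr_eq0 eq_sym (negbTE am) /= => /eqP.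
Qed.

Lemma two_ne0 : p != 2%N -> (2%:R : F) != 0.
Proof.
move=> p2; rewrite -(dvdn_pcharf (pchar_Fp pr)).
apply/negP => /(dvdn_leq (isT : (0 < 2)%N)) => h.
have := prime_gt1 pr; lia.
Qed.

Lemma symm n : odd n -> p != 2%N ->
  \sum_(u : F) (u * (u + 2%:R) * (u + 4%:R)) ^+ n = 0.
Proof.
move=> on p2.
set S := \sum_(u : F) _.
have HS : S = - S.
  have inj : injective (fun u : F => - 4%:R - u).
    by apply: (can_inj (g := fun u : F => - 4%:R - u)) => u; rewrite opprB addrC subrK.
  rewrite {1}/S (reindex_inj inj) /= /S -sumrN.
  apply: eq_bigr => u _.
  have -> : (- 4%:R - u) * (- 4%:R - u + 2%:R) * (- 4%:R - u + 4%:R) = - (u * (u + 2%:R) * (u + 4%:R)) :> F.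
    by ring.
  by rewrite exprNn -signr_odd on mulN1r.
have : 2%:R * S = 0 by rewrite mulr2n mulrDl mul1r {1}HS addNr.
by move/eqP; rewrite mulf_eq0 (negbTE (two_ne0 p2)) /= => /eqP.
Qed.

Definition cc n k j : F := (-1) ^+ k * ('C(n, k))%:R * ('C(2 * (n - k), j))%:R * 3%:R ^+ (2 * (n - k) - j).

Lemma pw n (u : F) : (u * (u + 2%:R) * (u + 4%:R)) ^+ n =
  \sum_(k < n.+1) \sum_(j < (2 * (n - k)).+1) cc n k j * u ^+ (n + j).
Proof.
rewrite (_ : u * (u + 2%:R) * (u + 4%:R) = u * ((3%:R + u) ^+ 2 + (-1))); last by ring.
rewrite exprMn exprDn mulr_sumr; apply: eq_bigr => k _.
rewrite -exprM exprDn mulr_suml -sumrMnl mulr_sumr; apply: eq_bigr => j _.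
rewrite /cc exprD.
ring.
Qed.

Lemma expand n : p = (2 * n + 1)%N -> (0 < n)%N ->
  \sum_(u : F) (u * (u + 2%:R) * (u + 4%:R)) ^+ n = - Bgen F n.
Proof.
move=> pn n0.
rewrite (eq_bigr _ (fun u _ => pw n u)).
transitivity (\sum_(k < n.+1) - cc n k n).
  rewrite exchange_big; apply: eq_bigr => k _ /=; rewrite exchange_big /=.
  transitivity (- \sum_(j < (2 * (n - k)).+1) cc n k j * ((j : nat) == n)%:R).
    rewrite -sumrN; apply: eq_bigr => j _; rewrite -mulr_sumr powsum; last 2 first.
    - lia.
    - have := ltn_ord j; have := ltn_ord k; rewrite pn /=; lia.
    have -> : (n + j == p.-1)%N = ((j : nat) == n).
      by rewrite pn; apply/eqP; case: eqP; lia.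
    by case: eqP => _; rewrite ?mulr1 ?mulr0 ?mulrN1 ?oppr0.
  by rewrite sum_delta // => h; rewrite /cc (bin_small h) mulr0 mul0r.
rewrite sumrN; congr (- _).
rewrite -(big_mkord xpredT (fun k => cc n k n)) /Bgen.
have hle : (n./2.+1 <= n.+1)%N by rewrite ltnS leq_half_double -addnn; lia.
rewrite (big_cat_nat (leq0n _) hle) /=.
have -> : \sum_(n./2.+1 <= i < n.+1) cc n i n = 0.
  rewrite big_nat_cond big1 // => k /andP [/andP [hk1 hk2] _].
  rewrite /cc (@bin_small (2 * (n - k)) n) ?mulr0 ?mul0r //.
  have := odd_double_half n; rewrite -addnn; have := leq_b1 (odd n); lia.
rewrite addr0.
apply: eq_big_nat => k /andP [_ hk].
have hk2 : (2 * k <= n)%N.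
  have := odd_double_half n; rewrite -addnn; have := leq_b1 (odd n); lia.
rewrite /cc natrM !mulrA.
have -> : (2 * (n - k) = 2 * n - 2 * k)%N by lia.
have -> : (2 * n - 2 * k - n = n - 2 * k)%N by lia.
by [].
Qed.
End PS.

Lemma Bgen_int (R : nzRingType) n : (Bgen int n)%:~R = Bgen R n.
Proof.
rewrite /Bgen rmorph_sum; apply: eq_bigr => k _.
rewrite !rmorphM /= rmorphXn rmorphN1 /= rmorphXn /=. by rewrite !rmorph_nat.
Qed.

Lemma fact_id n k : (2 * k <= n)%N ->
  ((2 * n - 2 * k)`!)%:R / ((k`!)%:R * ((n - k)`!)%:R * ((n - 2 * k)`!)%:R)
  = ('C(n, k) * 'C(2 * n - 2 * k, n))%:R :> rat.
Proof.
move=> hk.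
have E : (2 * n - 2 * k)`! = ('C(n, k) * 'C(2 * n - 2 * k, n) * (k`! * (n - k)`! * (n - 2 * k)`!))%N.
  rewrite -(@bin_fact (2 * n - 2 * k) n); last by lia.
  have -> : (2 * n - 2 * k - n = n - 2 * k)%N by lia.
  rewrite -(@bin_fact n k); last by lia.
  ring.
have D : (k`!)%:R * ((n - k)`!)%:R * ((n - 2 * k)`!)%:R = ((k`! * (n - k)`! * (n - 2 * k)`!)%N)%:R :> rat by rewrite !natrM.
by rewrite D E natrM mulfK // pnatr_eq0 -lt0n !muln_gt0 !fact_gt0.
Qed.

Lemma leg_eq n : legendreP n 3%:R = (2%:R ^+ n)^-1 * Bgen rat n.
Proof.
rewrite /legendreP /Bgen; congr (_ * _); apply: eq_big_nat => k /andP [_ hk].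
have hk2 : (2 * k <= n)%N.
  move: hk; rewrite ltnS; have := odd_double_half n; rewrite -addnn; have := leq_b1 (odd n); lia.
by rewrite -fact_id // !mulrA.
Qed.

Theorem corollary2p3 (p : nat) :
  prime p -> (p %% 4 = 3)%N ->
  (Posz p %| numq (legendreP ((p - 1) %/ 2) 3%:R))%Z.
Proof.
move=> pr p4.
set n := ((p - 1) %/ 2)%N.
have pn : p = (2 * n + 1)%N by rewrite /n; lia.
have n0 : (0 < n)%N by rewrite /n; lia.
have p2 : p != 2%N by apply/eqP; lia.
have on : odd n.
  have : (n = 2 * ((p %/ 4)) + 1)%N by rewrite /n; lia.
  by move=> ->; rewrite addn1 /= oddM.
have BF : Bgen 'F_p n = 0.
  have := expand pr pn n0; rewrite symm // => /eqP; rewrite eq_sym oppr_eq0 => /eqP.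
  by [].
have dB : (Posz p %| Bgen int n)%Z.
  by rewrite (dvdz_pcharf (pchar_Fp pr)) Bgen_int BF.
set x := legendreP n 3%:R.
have hx : x = (2%:R ^+ n)^-1 * (Bgen int n)%:~R by rewrite /x leg_eq Bgen_int.
have E : numq x * 2 ^+ n = Bgen int n * denq x.
  apply/eqP; rewrite -(eqr_int rat) !intrM numqE hx rmorphXn /=.
  rewrite mulrC mulrA mulrA mulfV ?mul1r //.
  by rewrite expf_neq0 // pnatr_eq0.
have : (Posz p %| numq x * 2 ^+ n)%Z by rewrite E dvdz_mulr.
rewrite Gauss_dvdzl // coprimezXr // coprimezE /=.
rewrite prime_coprime //; apply/negP => /(dvdn_leq (isT : (0 < 2)%N)).
have := prime_gt1 pr; move: p2; lia.
Qed.
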